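(* Let $p>r\geq2$ and let $A$ be a symmetric nonnegative $r$-matrix of order $n$ with no zero slices. If $\mathbf{x}\in\mathbb{R}^n$ is a nonnegative vector with $|\mathbf{x}|_p=1$ and $P_A(\mathbf{x})=\lambda^{(p)}(A)$, then $\mathbf{x}$ is positive.
   Context: A cubical $r$-matrix of order $n$ is a function $A$ on $[n]^r$ with entries $a_{i_1,\ldots,i_r}$; symmetric means invariant under permutations of indices. A slice of $A$ is the $(r-1)$-matrix obtained by fixing one index $i_k=s$; a zero slice is one all of whose entries are $0$. $P_A(\mathbf{x})=\sum a_{i_1,\ldots,i_r}x_{i_1}\cdots x_{i_r}$ and $\lambda^{(p)}(A)=\max\{P_A(\mathbf{x}):\mathbf{x}\in\mathbb{R}^n,\ |\mathbf{x}|_p=1\}$. *)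

(* Defs.v *)
From mathcomp Require Import all_boot all_order all_algebra all_fingroup.
From mathcomp Require Import all_classical all_reals all_analysis.
Set Implicit Arguments. Unset Strict Implicit. Unset Printing Implicit Defensive.
Import Order.TTheory GRing.Theory Num.Theory.
Local Open Scope ring_scope.
Local Open Scope classical_set_scope.

(* A cubical r-matrix of order n: a function on [n]^r, indices as
   finite functions 'I_r -> 'I_n (i.e. tuples (i_1,...,i_r)). *)
Definition rmatrix (R : realType) (r n : nat) := {ffun 'I_r -> 'I_n} -> R.

Definition symmetric_rmatrix (R : realType) r n (A : rmatrix R r n) : Prop :=
  forall (s : {perm 'I_r}) (i : {ffun 'I_r -> 'I_n}),
    A [ffun k => i (s k)] = A i.

Definition nonneg_rmatrix (R : realType) r n (A : rmatrix R r n) : Prop :=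
  forall i, 0 <= A i.

Definition zero_slice (R : realType) r n (A : rmatrix R r n)
  (k : 'I_r) (s : 'I_n) : Prop :=
  forall i : {ffun 'I_r -> 'I_n}, i k = s -> A i = 0.

Definition no_zero_slices (R : realType) r n (A : rmatrix R r n) : Prop :=
  forall k s, ~ zero_slice A k s.

Definition PA (R : realType) r n (A : rmatrix R r n) (x : 'I_n -> R) : R :=
  \sum_(i : {ffun 'I_r -> 'I_n}) A i * \prod_(k < r) x (i k).

Definition pnorm (R : realType) n (p : R) (x : 'I_n -> R) : R :=
  (\sum_(j < n) `|x j| `^ p) `^ p^-1.

Definition lambda_p (R : realType) r n (p : R) (A : rmatrix R r n) : R :=
  sup [set PA A x | x in [set x : 'I_n -> R | pnorm p x = 1]].

(* Main.v *)
Require Import Defs.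
From mathcomp Require Import all_boot all_order all_algebra all_fingroup.
From mathcomp Require Import all_classical all_reals all_analysis.
From mathcomp Require Import ring.
Import Order.TTheory GRing.Theory Num.Theory.
Local Open Scope ring_scope.

Lemma pnorm_sum (R : realType) n (p : R) (x : 'I_n -> R) :
  0 < p -> pnorm p x = 1 -> \sum_(j < n) `|x j| `^ p = 1.
Proof.
move=> p0; rewrite /pnorm => h.
have s0 : 0 <= \sum_(j < n) `|x j| `^ p by apply: sumr_ge0 => *; exact: powR_ge0.
transitivity ((\sum_(j < n) `|x j| `^ p) `^ (p^-1 * p)).
  by rewrite mulVf ?powRr1 // gt_eqF.
by rewrite powRrM h powR1.
Qed.

Lemma pnorm_le1 (R : realType) n (p : R) (x : 'I_n -> R) l :
  1 <= p -> pnorm p x = 1 -> `|x l| <= 1.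
Proof.
move=> p1 h; have p0 : 0 < p by apply: lt_le_trans p1.
have hs := @pnorm_sum _ _ _ _ p0 h.
have hl : `|x l| `^ p <= 1.
  rewrite -hs (bigD1 l) //= lerDl; apply: sumr_ge0 => *; exact: powR_ge0.
rewrite leNgt; apply/negP => hlt.
have := le1r_powR (ltW hlt) p1; rewrite leNgt => /negP; apply.
exact: le_lt_trans hl hlt.
Qed.

Lemma bounded_PA (R : realType) r n (p : R) (A : rmatrix R r n) :
  1 <= p -> nonneg_rmatrix A ->
  has_ubound [set PA A x | x in [set x : 'I_n -> R | pnorm p x = 1]].
Proof.
move=> p1 Anon; exists (\sum_i A i) => _ [v /= hv <-].
rewrite /PA; apply: ler_sum => i _.
rewrite -[leRHS]mulr1; apply: ler_wpM2l; first exact: Anon.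
apply: le_trans (real_ler_norm _) _; first by apply: num_real.
rewrite normr_prod; apply: prodr_ile1 => k _.
by rewrite normr_ge0 /=; exact: (@pnorm_le1 _ _ p).
Qed.

Theorem corollary12 (R : realType) (r n : nat) (p : R)
  (A : rmatrix R r n) (x : 'I_n -> R) :
  (2 <= r)%N -> r%:R < p ->
  symmetric_rmatrix A -> nonneg_rmatrix A -> no_zero_slices A ->
  (forall j, 0 <= x j) -> pnorm p x = 1 -> PA A x = lambda_p p A ->
  forall j, 0 < x j.
Proof.
move=> r2 rp _ Anon Anz xge0 nx PAx j.
rewrite lt_neqAle xge0 andbT eq_sym; apply/negP => /eqP xj0.
have r1 : (1 <= r%:R :> R) by rewrite ler1n; apply: leq_trans r2.
have p1 : 1 <= p by apply: le_trans r1 (ltW rp).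
have p0 : 0 < p by apply: lt_le_trans p1.
have pr0 : 0 < p - r%:R by rewrite subr_gt0.
have r0 : (0 < r)%N by apply: leq_trans r2.
pose k : 'I_r := Ordinal r0.
have := Anz k j; rewrite /zero_slice => /existsNP [i0] /not_implyP [i0k Ai0].
set a := A i0.
have a0 : 0 < a by rewrite lt_neqAle eq_sym; apply/andP; split; [apply/eqP|exact: Anon].
have P0 : 0 <= PA A x.
  apply: sumr_ge0 => i _; apply: mulr_ge0; first exact: Anon.
  by apply: prodr_ge0 => *; exact: xge0.
set C := PA A x * n%:R + 1.
have C0 : 0 < C by rewrite /C ltr_pwDr // mulr_ge0.
set d := a / C.
have d0 : 0 < d by rewrite divr_gt0.
set t := d `^ (p - r%:R)^-1.
have t0 : 0 < t by apply: powR_gt0.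
have ht : t `^ (p - r%:R) = d.
  by rewrite /t -powRrM mulVf ?gt_eqF // powRr1 // ltW.
have htp : t `^ p = t ^+ r * d.
  rewrite -{1}(subrKC (r%:R) p) powRD; last by rewrite (gt_eqF t0) implybT.
  by rewrite powR_mulrn ?ltW // ht.
pose y l := Num.max (x l) t.
have yx l : x l <= y l by rewrite /y le_max lexx.
have yt l : t <= y l by rewrite /y le_max lexx orbT.
have y0 l : 0 <= y l by apply: le_trans (ltW t0) (yt l).
set S := \sum_l y l `^ p.
have hsx := @pnorm_sum _ _ _ _ p0 nx.
have S1 : 1 <= S.
  rewrite -hsx /S; apply: ler_sum => l _; rewrite ger0_norm //.
  by apply: ge0_ler_powR; rewrite ?nnegrE // ltW.
have S2 : S <= 1 + n%:R * t `^ p.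
  have -> : 1 + n%:R * t `^ p = \sum_l (`|x l| `^ p + t `^ p).
    by rewrite big_split /= hsx sumr_const card_ord mulr_natl.
  apply: ler_sum => l _; rewrite ger0_norm // /y maxEle.
  case: ifP => _; first by rewrite lerDr powR_ge0.
  by rewrite lerDl powR_ge0.
have S0 : 0 < S by apply: lt_le_trans S1.
set M := S `^ (- p^-1).
have M0 : 0 <= M by apply: powR_ge0.
pose w l := y l * M.
have nw : pnorm p w = 1.
  rewrite /pnorm.
  have -> : \sum_(j0 < n) `|w j0| `^ p = 1; last by rewrite powR1.
  transitivity (S * M `^ p).
    rewrite /S mulr_suml; apply: eq_bigr => l _.
    by rewrite ger0_norm ?mulr_ge0 // powRM.
  rewrite /M -powRrM mulNr mulVf ?gt_eqF // powR_inv1 ?ltW // mulfV ?gt_eqF //.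
have PAw : PA A w = M ^+ r * PA A (fun l => y l).
  rewrite /PA mulr_sumr; apply: eq_bigr => i _.
  rewrite mulrCA; congr (_ * _); rewrite /w big_split /= prodr_const card_ord.
  by rewrite mulrC.
have Mr : M ^+ r = (S `^ (p^-1 * r%:R))^-1.
  by rewrite -powR_mulrn // /M -powRrM mulNr powRN.
set Q := S `^ (p^-1 * r%:R).
have Q0 : 0 < Q by apply: powR_gt0.
have QS : Q <= S.
  apply: ler1_powR => //; rewrite ler_pdivrMl // mulr1; exact: ltW.
have PAy : PA A x + a * t ^+ r <= PA A (fun l => y l).
  rewrite /PA (bigD1 i0) //= [X in _ <= X](bigD1 i0) //=.
  rewrite (bigD1 k) //= i0k xj0 mul0r mulr0 add0r addrC.
  apply: lerD.
    apply: ler_sum => i _; apply: ler_wpM2l; first exact: Anon.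
    by apply: ler_prod => l _; rewrite xge0 yx.
  apply: ler_wpM2l; first exact: ltW.
  have -> : t ^+ r = \prod_(k0 < r) t by rewrite prodr_const card_ord.
  by apply: ler_prod => l _; rewrite (ltW t0) yt.
have hw : PA A w <= PA A x.
  rewrite PAx /lambda_p; apply: sup_upper_bound.
    split; last exact: bounded_PA.
    by exists (PA A x), x.
  by exists w.
rewrite PAw Mr in hw.
have hy : PA A (fun l => y l) <= Q * PA A x.
  by rewrite -ler_pdivrMl // mulrC.
have key : a * t ^+ r <= n%:R * (t ^+ r * d) * PA A x.
  rewrite -htp; have := le_trans PAy (le_trans hy (ler_wpM2r P0 (le_trans QS S2))).
  by rewrite mulrDl mul1r lerD2l.
have tr0 : 0 < t ^+ r by apply: exprn_gt0.
have : a <= PA A x * n%:R * d.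
  rewrite -(ler_pM2r tr0); apply: le_trans key _.
  by rewrite le_eqVlt; apply/orP; left; apply/eqP; ring.
have : PA A x * n%:R * d < a.
  by rewrite /d mulrA ltr_pdivrMr // /C mulrDr mulr1 [X in X < _]mulrC ltrDl.
by move=> h1 h2; have := lt_le_trans h1 h2; rewrite ltxx.
Qed.
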